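(* Suppose Assumptions 1–4 hold. Let $\mathbf{x}$ be a Cournot candidate and $\mathbf{x}^S$ a social optimum, with $X=\sum_n x_n$ and $X^S=\sum_n x^S_n$. If $p(X)\neq p(X^S)$, then $p(X)>p(X^S)$ and $X<X^S$.
   Context: Cournot model: $N$ suppliers, inverse demand $p:[0,\infty)\to[0,\infty)$, supplier $n$ has cost $C_n:[0,\infty)\to[0,\infty)$ and chooses $x_n\ge0$; $X=\sum_n x_n$. $\partial_\pm$ denote right/left derivatives; $C_n'(0)$ is the right derivative at $0$. Assumption 1: each $C_n$ is convex, continuous, nondecreasing on $[0,\infty)$, continuously differentiable on $(0,\infty)$, with $C_n(0)=0$. Assumption 2: $p$ is continuous, nonnegative, nonincreasing, $p(0)>0$; its right derivative at $0$ exists and at every $q>0$ its left and right derivatives exist. Assumption 3: there exists $R>0$ such that $p(R)\le\min_n C_n'(0)$. Assumption 4: $p(0)>\min_n C_n'(0)$. A social optimum is a nonnegative vector maximizing $\int_0^X p(q)\,dq-\sum_n C_n(x_n)$. A nonnegative vector $\mathbf{x}$ is a Cournot candidate if for every $n$: $C_n'(x_n)\le p(X)+x_n\,\partial_-p(X)$ whenever $x_n>0$, and $C_n'(x_n)\ge p(X)+x_n\,\partial_+p(X)$. *)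

(* Defs.v *)
From Stdlib Require Import Reals Lra.
Open Scope R_scope.

Fixpoint sumR (N : nat) (f : nat -> R) : R :=
  match N with O => 0 | S k => sumR k f + f k end.

Definition right_deriv (f : R -> R) (x l : R) : Prop :=
  forall eps, 0 < eps -> exists delta, 0 < delta /\
    forall h, 0 < h < delta -> Rabs ((f (x + h) - f x) / h - l) < eps.

Definition left_deriv (f : R -> R) (x l : R) : Prop :=
  forall eps, 0 < eps -> exists delta, 0 < delta /\
    forall h, 0 < h < delta -> Rabs ((f x - f (x - h)) / h - l) < eps.

Definition cont_nonneg (f : R -> R) : Prop :=
  forall x, 0 <= x -> forall eps, 0 < eps -> exists delta, 0 < delta /\
    forall y, 0 <= y -> Rabs (y - x) < delta -> Rabs (f y - f x) < eps.

Definition convex_nonneg (f : R -> R) : Prop :=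
  forall a b t, 0 <= a -> 0 <= b -> 0 <= t <= 1 ->
    f (t * a + (1 - t) * b) <= t * f a + (1 - t) * f b.

Definition nondecr_nonneg (f : R -> R) : Prop :=
  forall a b, 0 <= a <= b -> f a <= f b.

Definition nonincr_nonneg (f : R -> R) : Prop :=
  forall a b, 0 <= a <= b -> f b <= f a.

(* Assumption 1 for a cost function C with derivative dC
   (dC 0 is the right derivative at 0, dC x the derivative for x > 0). *)
Definition cost_ok (C dC : R -> R) : Prop :=
  convex_nonneg C /\ cont_nonneg C /\ nondecr_nonneg C /\ C 0 = 0 /\
  right_deriv C 0 (dC 0) /\
  (forall x, 0 < x -> derivable_pt_lim C x (dC x)) /\
  (forall x, 0 < x -> continuity_pt dC x).

Definition integral_is (f : R -> R) (a b v : R) : Prop :=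
  exists pr : Riemann_integrable f a b, RiemannInt pr = v.

Definition nonneg_vec (N : nat) (x : nat -> R) : Prop :=
  forall n, (n < N)%nat -> 0 <= x n.

Definition social_optimum (N : nat) (p : R -> R) (C : nat -> R -> R)
  (xS : nat -> R) : Prop :=
  nonneg_vec N xS /\
  forall y : nat -> R, nonneg_vec N y ->
    forall vy vS, integral_is p 0 (sumR N y) vy ->
      integral_is p 0 (sumR N xS) vS ->
      vy - sumR N (fun n => C n (y n)) <= vS - sumR N (fun n => C n (xS n)).

(* Cournot candidate; dC n is C_n', dpL / dpR the left/right derivatives of p *)
Definition cournot_candidate (N : nat) (p dpL dpR : R -> R)
  (dC : nat -> R -> R) (x : nat -> R) : Prop :=
  nonneg_vec N x /\
  forall n, (n < N)%nat ->
    (0 < x n -> dC n (x n) <= p (sumR N x) + x n * dpL (sumR N x)) /\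
    dC n (x n) >= p (sumR N x) + x n * dpR (sumR N x).

(* Main.v *)
Require Import Defs.
From Stdlib Require Import Reals Lra Lia.
From Coquelicot Require Import Coquelicot.
Open Scope R_scope.

Lemma sumR_ext N f g : (forall m, (m < N)%nat -> f m = g m) -> sumR N f = sumR N g.
Proof.
  induction N; intros H; simpl; auto.
  rewrite IHN; [rewrite (H N); auto; lia|]. intros; apply H; lia.
Qed.

Lemma sumR_update N f g n : (n < N)%nat -> (forall m, m <> n -> f m = g m) ->
  sumR N f = sumR N g + (f n - g n).
Proof.
  induction N; intros Hn H; simpl. lia.
  destruct (Nat.eq_dec n N).
  - subst. rewrite (sumR_ext N f g). lra. intros; apply H; lia.
  - rewrite IHN; [|lia|auto]. rewrite (H N); auto. lra.
Qed.

Lemma sumR_exists N f g : sumR N g < sumR N f -> exists n, (n < N)%nat /\ g n < f n.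
Proof.
  induction N; simpl; intros H. lra.
  destruct (Rlt_dec (g N) (f N)) as [Hl|Hl]. exists N; split; auto.
  destruct IHN as [k [Hn1 Hn2]]. lra. exists k; split; auto.
Qed.

Lemma sumR_nonneg N f : (forall n, (n < N)%nat -> 0 <= f n) -> 0 <= sumR N f.
Proof.
  induction N; simpl; intros H. lra.
  assert (0 <= f N) by (apply H; lia).
  assert (0 <= sumR N f) by (apply IHN; intros; apply H; lia). lra.
Qed.

Lemma conv3 C u v w : convex_nonneg C -> 0 <= u -> u < v -> v < w ->
  (w - u) * C v <= (w - v) * C u + (v - u) * C w.
Proof.
  intros Hc Hu Huv Hvw.
  set (t := (w - v) / (w - u)).
  assert (Ht : 0 <= t <= 1).
  { unfold t; split. apply Rdiv_le_0_compat; lra.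
    apply (Rmult_le_reg_r (w - u)). lra. unfold Rdiv; rewrite Rmult_assoc, Rinv_l; lra. }
  assert (Hv : t * u + (1 - t) * w = v) by (unfold t; field; lra).
  pose proof (Hc u w t Hu ltac:(lra) Ht) as H. rewrite Hv in H.
  assert (H2 : (w - u) * C v <= (w - u) * (t * C u + (1 - t) * C w))
    by (apply Rmult_le_compat_l; lra).
  replace ((w - u) * (t * C u + (1 - t) * C w)) with ((w - v) * C u + (v - u) * C w) in H2
    by (unfold t; field; lra). exact H2.
Qed.

Lemma dpL_nonpos p X l : nonincr_nonneg p -> 0 < X -> left_deriv p X l -> l <= 0.
Proof.
  intros Hd HX Hl. destruct (Rle_dec l 0) as [|Hn]; auto.
  destruct (Hl l ltac:(lra)) as [d [Hd0 Hd1]].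
  set (h := Rmin (d/2) X).
  assert (Hh : 0 < h < d) by (unfold h; unfold Rmin; destruct Rle_dec; lra).
  specialize (Hd1 h Hh).
  assert (Hq : (p X - p (X - h)) / h <= 0).
  { assert (p X <= p (X - h)) by (apply Hd; unfold h in *; split;
      [assert (Rmin (d/2) X <= X) by apply Rmin_r; lra | lra]).
    unfold Rdiv. assert (0 < / h) by (apply Rinv_0_lt_compat; lra). nra. }
  revert Hd1. set (q := (p X - p (X - h)) / h) in *.
  intros Hd1. apply Rabs_def2 in Hd1. lra.
Qed.

Lemma Rabs_max0 x z : Rabs (Rmax 0 x - Rmax 0 z) <= Rabs (x - z).
Proof.
  unfold Rmax; destruct (Rle_dec 0 x); destruct (Rle_dec 0 z);
  unfold Rabs; repeat destruct Rcase_abs; lra.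
Qed.

Lemma p_RInt p b : cont_nonneg p -> 0 <= b -> ex_RInt p 0 b.
Proof.
  intros Hc Hb.
  apply (ex_RInt_ext (fun t => p (Rmax 0 t))).
  { intros t Ht. rewrite Rmin_left in Ht by lra. rewrite Rmax_right in Ht by lra.
    rewrite Rmax_right by lra. auto. }
  apply (@ex_RInt_continuous R_CompleteNormedModule). intros z _.
  apply continuity_pt_filterlim.
  unfold continuity_pt, continue_in, limit1_in, limit_in. simpl. unfold R_dist.
  intros eps He.
  destruct (Hc (Rmax 0 z) (Rmax_l 0 z) eps He) as [d [Hd Hd']].
  exists d; split; auto. intros y [_ Hy].
  apply Hd'. apply Rmax_l. pose proof (Rabs_max0 y z). lra.
Qed.

Theorem proposition7
  (N : nat) (HN : (0 < N)%nat)
  (p dpL dpR : R -> R) (C dC : nat -> R -> R)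
  (* Assumption 1 *)
  (HC : forall n, (n < N)%nat -> cost_ok (C n) (dC n))
  (* Assumption 2 *)
  (Hpc : cont_nonneg p) (Hpnn : forall q, 0 <= q -> 0 <= p q)
  (Hpdec : nonincr_nonneg p) (Hp0 : 0 < p 0)
  (HdpR : forall q, 0 <= q -> right_deriv p q (dpR q))
  (HdpL : forall q, 0 < q -> left_deriv p q (dpL q))
  (* Assumption 3 *)
  (HA3 : exists Rb, 0 < Rb /\ forall n, (n < N)%nat -> p Rb <= dC n 0)
  (* Assumption 4 *)
  (HA4 : exists n, (n < N)%nat /\ dC n 0 < p 0)
  (x xS : nat -> R)
  (Hx : cournot_candidate N p dpL dpR dC x)
  (HxS : social_optimum N p C xS) :
  p (sumR N x) <> p (sumR N xS) ->
  p (sumR N x) > p (sumR N xS) /\ sumR N x < sumR N xS.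
Proof.
  intros Hne.
  destruct Hx as [Hxnn Hxc]. destruct HxS as [HSnn HSopt].
  set (X := sumR N x) in *. set (XS := sumR N xS) in *.
  assert (HX0 : 0 <= X) by (apply sumR_nonneg; auto).
  assert (HXS0 : 0 <= XS) by (apply sumR_nonneg; auto).
  assert (Hgt : p X > p XS).
  { destruct (Rtotal_order (p X) (p XS)) as [Hlt|[Heq|Hgt]]; [|contradiction|exact Hgt].
    exfalso.
    assert (HXlt : XS < X).
    { destruct (Rlt_dec XS X); auto. assert (p XS <= p X) by (apply Hpdec; lra). lra. }
    destruct (sumR_exists N x xS HXlt) as [n [Hn Hab]].
    set (a := xS n) in *. set (b := x n) in *.
    assert (Ha0 : 0 <= a) by (apply HSnn; auto).
    destruct (HC n Hn) as [Hconv [_ [_ [_ [_ [Hder _]]]]]].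
    assert (HdCb : dC n b <= p X).
    { destruct (Hxc n Hn) as [H1 _].
      assert (dpL X <= 0) by (apply (dpL_nonpos p X); [exact Hpdec| lra| apply HdpL; lra]).
      specialize (H1 ltac:(change (0 < b); lra)). fold X in H1. fold b in H1.
      assert (0 <= b) by lra. nra. }
    assert (Hopt : forall h, 0 < h -> h * p (XS + h) <= C n (a + h) - C n a).
    { intros h Hh.
      set (y := fun m => if Nat.eq_dec m n then xS m + h else xS m).
      assert (Hy : nonneg_vec N y).
      { intros m Hm. unfold y; destruct Nat.eq_dec; [subst; pose proof (HSnn n Hm); lra| auto]. }
      assert (HsY : sumR N y = XS + h).
      { unfold XS. rewrite (sumR_update N y xS n Hn).
        unfold y; destruct Nat.eq_dec; [lra|congruence].
        intros m Hm; unfold y; destruct Nat.eq_dec; congruence. }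
      assert (HsC : sumR N (fun m => C m (y m)) = sumR N (fun m => C m (xS m)) + (C n (a + h) - C n a)).
      { rewrite (sumR_update N (fun m => C m (y m)) (fun m => C m (xS m)) n Hn).
        unfold y; destruct Nat.eq_dec; [reflexivity|congruence].
        intros m Hm; unfold y; destruct Nat.eq_dec; congruence. }
      assert (I1 : ex_RInt p 0 XS) by (apply p_RInt; auto).
      assert (I2 : ex_RInt p 0 (XS + h)) by (apply p_RInt; auto; lra).
      assert (I3 : ex_RInt p XS (XS + h)) by (apply (ex_RInt_Chasles_2 p 0); auto; lra).
      assert (Hint : integral_is p 0 (sumR N y) (RInt p 0 (XS + h))).
      { rewrite HsY. exists (ex_RInt_Reals_0 _ _ _ I2). rewrite <- RInt_Reals. reflexivity. }
      assert (HintS : integral_is p 0 XS (RInt p 0 XS)).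
      { exists (ex_RInt_Reals_0 _ _ _ I1). rewrite <- RInt_Reals. reflexivity. }
      pose proof (HSopt y Hy _ _ Hint HintS) as Hle. rewrite HsC in Hle. fold XS in Hle.
      pose proof (RInt_Chasles p 0 XS (XS + h) I1 I3) as Hch.
      assert (Hlow : RInt (fun _ => p (XS + h)) XS (XS + h) <= RInt p XS (XS + h)).
      { apply RInt_le; auto. lra. apply ex_RInt_const.
        intros t Ht. apply Hpdec. lra. }
      rewrite RInt_const in Hlow. unfold scal in Hlow; simpl in Hlow. unfold mult in Hlow; simpl in Hlow.
      unfold plus in Hch; simpl in Hch.
      replace (XS + h - XS) with h in Hlow by ring. lra. }
    assert (HB : C n b - C n a <= dC n b * (b - a)).
    { destruct (Rle_dec (C n b - C n a) (dC n b * (b - a))) as [|Hn']; auto. exfalso.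
      set (l := dC n b) in *.
      set (S := (C n b - C n a) / (b - a)).
      assert (HS : C n b - C n a = S * (b - a)) by (unfold S; field; lra).
      assert (HSl : l < S).
      { destruct (Rlt_dec l S); auto. exfalso. apply Hn'. rewrite HS.
        apply Rmult_le_compat_r; lra. }
      destruct (Hder b ltac:(lra) (S - l) ltac:(lra)) as [d Hd].
      set (k := Rmin (d/2) ((b - a)/2)).
      assert (Hk : 0 < k < d /\ k < b - a).
      { pose proof (cond_pos d). unfold k, Rmin; destruct Rle_dec; lra. }
      assert (Hk' := Hd (- k) ltac:(lra) ltac:(rewrite Rabs_Ropp, Rabs_right; lra)).
      apply Rabs_def2 in Hk'. destruct Hk' as [Hk1 _].
      replace ((C n (b + - k) - C n b) / - k) with ((C n b - C n (b - k)) / k) in Hk1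
        by (replace (b + - k) with (b - k) by ring; field; lra).
      pose proof (conv3 (C n) a (b - k) b Hconv Ha0 ltac:(lra) ltac:(lra)) as Hc3.
      (* (b-a) C(b-k) <= k C a + (b-k-a) C b  =>  S*k <= C b - C (b-k) *)
      assert (Hq : S * k <= C n b - C n (b - k)).
      { assert (S * (b - a) * k <= (C n b - C n (b - k)) * (b - a)) by (rewrite <- HS; nra).
        apply (Rmult_le_reg_r (b - a)). lra. nra. }
      assert (Hq2 : S <= (C n b - C n (b - k)) / k).
      { apply (Rmult_le_reg_r k). lra. unfold Rdiv. rewrite Rmult_assoc, Rinv_l; lra. }
      unfold l in *; lra. }
    assert (Hfin : forall h, 0 < h < b - a -> p (XS + h) <= p X).
    { intros h Hh. pose proof (Hopt h ltac:(lra)) as H1.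
      pose proof (conv3 (C n) a (a + h) b Hconv Ha0 ltac:(lra) ltac:(lra)) as Hc3.
      assert (h * p (XS + h) * (b - a) <= h * (C n b - C n a)) by nra.
      assert (p (XS + h) * (b - a) <= C n b - C n a).
      { apply (Rmult_le_reg_l h). lra. nra. }
      assert (p (XS + h) * (b - a) <= p X * (b - a)) by nra.
      apply (Rmult_le_reg_r (b - a)). lra. exact H2. }
    destruct (Hpc XS HXS0 (p XS - p X) ltac:(lra)) as [d [Hd Hd']].
    set (h := Rmin (d/2) ((b - a)/2)).
    assert (Hh : 0 < h < d /\ h < b - a) by (unfold h, Rmin; destruct Rle_dec; lra).
    assert (H1 := Hd' (XS + h) ltac:(lra) ltac:(replace (XS + h - XS) with h by ring; rewrite Rabs_right; lra)).
    apply Rabs_def2 in H1. pose proof (Hfin h ltac:(lra)). lra. }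
  split; auto.
  destruct (Rlt_dec X XS); auto. assert (p X <= p XS) by (apply Hpdec; lra). lra.
Qed.
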